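(* Let $\mathbf{u}=(u_1,u_2)$ be a pair of real binary forms of degree $d$, and let $g,h,u_1',u_2'$ be real binary forms with $(u_1,u_2)=(u_1'gh,u_2'gh)$, $\gcd(u_1,u_2)=gh$, $\gcd(u_1',u_2')=1$, $\gcd(u_1'^2+u_2'^2,g)=1$, and such that every (possibly complex) root of $h$ is a root of $u_1'^2+u_2'^2$. Then both $u_1'^2+u_2'^2$ and $h$ have no real roots, and $\deg(h)$ is even.
   Context: A real binary form is a homogeneous polynomial in two variables $x_1,x_2$ with real coefficients. A root of a binary form $q$ is a nonzero point $(a,b)\in\mathbb{C}^2$ (up to scaling) with $q(a,b)=0$; a real root is one with $(a,b)\in\mathbb{R}^2\setminus\{0\}$. $\gcd$ of binary forms is the common divisor of highest degree (unique up to scalar); $\gcd=1$ means coprime. *)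

(* Defs.v *)
From HB Require Import structures.
From mathcomp Require Import all_boot all_order all_algebra.
From mathcomp Require Import mpoly.
From mathcomp Require Import complex.
Set Implicit Arguments. Unset Strict Implicit. Unset Printing Implicit Defensive.
Import Order.TTheory GRing.Theory Num.Theory.
Local Open Scope ring_scope.

(* Real binary forms: homogeneous polynomials in two variables x_1, x_2
   (indexed by 'I_2) with coefficients in a real closed field R
   (the paper: R = the reals). *)
Definition binary_form (R : rcfType) (q : {mpoly R[2]}) : Prop :=
  exists k : nat, q \is k.-homog.

(* Degree of a (nonzero) form = total degree. *)
Definition form_deg (R : rcfType) (q : {mpoly R[2]}) : nat := (msize q).-1.

Definition mdvd (R : rcfType) (p q : {mpoly R[2]}) : Prop :=
  exists c : {mpoly R[2]}, q = c * p.

(* r is a gcd of p and q (gcd is unique up to a nonzero scalar). *)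
Definition is_gcd (R : rcfType) (p q r : {mpoly R[2]}) : Prop :=
  mdvd r p /\ mdvd r q /\
  forall s : {mpoly R[2]}, mdvd s p -> mdvd s q -> mdvd s r.

Definition cplx (R : rcfType) (q : {mpoly R[2]}) : {mpoly R[i][2]} :=
  map_mpoly (fun x : R => (x%:C)%C) q.

Definition is_root_C (R : rcfType) (q : {mpoly R[2]}) (z : 'I_2 -> R[i]) : Prop :=
  (exists j, z j != 0) /\ (cplx q).@[z] = 0.

Definition is_root_R (R : rcfType) (q : {mpoly R[2]}) (x : 'I_2 -> R) : Prop :=
  (exists j, x j != 0) /\ q.@[x] = 0.

(* Main.v *)
Require Import Defs.
From HB Require Import structures.
From mathcomp Require Import all_boot all_order all_algebra.
From mathcomp Require Import mpoly.
From mathcomp Require Import complex.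
From mathcomp Require Import ring lra.
Import Order.TTheory GRing.Theory Num.Theory.
Local Open Scope ring_scope.

Lemma mmap_ext n (R S : nzRingType) (f1 f2 : R -> S) (v1 v2 : 'I_n -> S) p :
  f1 =1 f2 -> v1 =1 v2 -> mmap f1 v1 p = mmap f2 v2 p.
Proof.
move=> ef ev; rewrite /mmap; apply: eq_bigr => m _.
by rewrite ef (mmap1_eq _ ev).
Qed.

Lemma mmap_morph n (R S T : nzRingType) (phi : {rmorphism S -> T}) (f : R -> S) (v : 'I_n -> S) p :
  phi (mmap f v p) = mmap (phi \o f) (phi \o v) p.
Proof.
rewrite /mmap rmorph_sum; apply: eq_bigr => m _.
rewrite rmorphM rmorph_prod /mmap1 /=; congr (_ * _); apply: eq_bigr => i _.
by rewrite rmorphXn.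
Qed.

Lemma mmap_homog n (R : nzRingType) (S : comNzRingType) (f : R -> S) (c : 'I_n -> S) t k p :
  p \is k.-homog -> mmap f (fun i => c i * t) p = t ^+ k * mmap f c p.
Proof.
move=> /dhomog_mf hk; rewrite /mmap mulr_sumr big_seq [RHS]big_seq.
apply: eq_bigr => m Hm; rewrite /mmap1.
rewrite (eq_bigr (fun i => c i ^+ m i * t ^+ m i)); last by move=> i _; rewrite exprMn.
rewrite big_split /= prodrXr -mdegE hk //.
by rewrite mulrA [LHS]mulrC.
Qed.

Definition cong {R : rcfType} (D a b : {mpoly R[2]}) := mdvd D (a - b).

Lemma cong_refl {R : rcfType} (D a : {mpoly R[2]}) : cong D a a.
Proof. by exists 0; rewrite subrr mul0r. Qed.

Lemma cong_add {R : rcfType} (D a1 a2 b1 b2 : {mpoly R[2]}) :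
  cong D a1 b1 -> cong D a2 b2 -> cong D (a1 + a2) (b1 + b2).
Proof.
move=> [c1 e1] [c2 e2]; exists (c1 + c2).
by rewrite mulrDl -e1 -e2 opprD addrACA.
Qed.

Lemma cong_mul {R : rcfType} (D a1 a2 b1 b2 : {mpoly R[2]}) :
  cong D a1 b1 -> cong D a2 b2 -> cong D (a1 * a2) (b1 * b2).
Proof.
move=> [c1 e1] [c2 e2]; exists (a1 * c2 + c1 * b2).
rewrite mulrDl -mulrA -e2 mulrAC -e1; ring.
Qed.

Lemma cong_exp {R : rcfType} (D a b : {mpoly R[2]}) k :
  cong D a b -> cong D (a ^+ k) (b ^+ k).
Proof.
move=> h; elim: k => [|k ih]; first by rewrite !expr0; apply: cong_refl.
by rewrite !exprS; apply: cong_mul.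
Qed.

Lemma cong_mmap {R : rcfType} (D : {mpoly R[2]}) (f : R -> {mpoly R[2]}) (v1 v2 : 'I_2 -> {mpoly R[2]}) (p : {mpoly R[2]}) :
  (forall i, cong D (v1 i) (v2 i)) -> cong D (mmap f v1 p) (mmap f v2 p).
Proof.
move=> hv; rewrite /mmap; apply: (big_ind2 (cong D)).
- exact: cong_refl.
- by move=> ? ? ? ?; apply: cong_add.
move=> m _; apply: cong_mul; first exact: cong_refl.
rewrite /mmap1; apply: (big_ind2 (cong D)).
- exact: cong_refl.
- by move=> ? ? ? ?; apply: cong_mul.
by move=> i _; apply: cong_exp.
Qed.

Lemma mmap_id {R : rcfType} (q : {mpoly R[2]}) : mmap (@mpolyC 2 R) (fun i => 'X_i) q = q.
Proof. rewrite /mmap [RHS]mpolyE; apply: eq_bigr => m _; by rewrite mmap1_id mul_mpolyC. Qed.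

Lemma mmapC_eval {R : rcfType} (q : {mpoly R[2]}) x :
  mmap (@mpolyC 2 R) (fun i => (x i)%:MP) q = (q.@[x])%:MP.
Proof.
rewrite /meval (@mmap_morph 2 R R _ (@mpolyC 2 R)); exact: mmap_ext.
Qed.
Lemma o2 (i : 'I_2) : i = 0 \/ i = 1.
Proof.
case: i => [[|[|k]] Hk]; [left|right|by []]; exact: val_inj.
Qed.

Lemma no_common_real_root {R : rcfType} (u v : {mpoly R[2]}) (x : 'I_2 -> R) :
  binary_form u -> binary_form v -> is_gcd u v 1 -> (exists j, x j != 0) ->
  u.@[x] = 0 -> v.@[x] = 0 -> False.
Proof.
move=> [ku hu] [kv hv] [_ [_ hg]] [j xj] ux vx.
pose L : {mpoly R[2]} := (x 1)%:MP * 'X_0 - (x 0)%:MP * 'X_1.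
have key : forall k q, q \is k.-homog -> q.@[x] = 0 -> mdvd L q.
  move=> k q hq qx.
  have cfg : forall i, cong L ('X_i * (x j)%:MP) ((x i)%:MP * 'X_j).
    move=> i; rewrite /cong /mdvd /L.
    case: (o2 i) => ->; case: (o2 j) => ->.
    - by exists 0; ring.
    - by exists 1; ring.
    - by exists (-1); ring.
    - by exists 0; ring.
  have := @cong_mmap R L (@mpolyC 2 R) _ _ q cfg.
  rewrite (@mmap_homog 2 R _ _ (fun i => 'X_i) _ _ _ hq) (@mmap_homog 2 R _ _ (fun i => (x i)%:MP) _ _ _ hq).
  rewrite mmap_id mmapC_eval qx => -[c e].
  have e' : (x j ^+ k)%:MP * q = c * L.
    by rewrite rmorphXn -e rmorph0 mulr0 subr0.
  exists (((x j ^+ k)^-1)%:MP * c).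
  by rewrite -mulrA -e' mulrA -rmorphM /= mulVf ?expf_neq0 // rmorph1 mul1r.
have := hg L (key _ _ hu ux) (key _ _ hv vx).
move=> [c e].
have := congr1 (meval x) e.
rewrite mevalM meval1 /L mevalB !mevalM !mevalC !mevalXU.
by rewrite [x 1 * _]mulrC subrr mulr0 => /eqP; rewrite oner_eq0.
Qed.

Lemma cplx_eval {R : rcfType} (q : {mpoly R[2]}) (x : 'I_2 -> R) :
  (cplx q).@[fun i => (x i)%:C%C] = (q.@[x])%:C%C.
Proof.
rewrite /cplx /map_mpoly.
rewrite (@mmap_morph 2 R _ _ (meval (fun i => (x i)%:C%C))).
rewrite /meval (@mmap_morph 2 R _ _ (real_complex R)).
apply: mmap_ext => r /=; by rewrite ?mevalC ?mevalXU.
Qed.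

Definition pt {R : rcfType} (a b : R) := fun i : 'I_2 => if i == 0 then a else b.

Lemma evpt {R : rcfType} (q : {mpoly R[2]}) (P Q : {poly R}) t :
  (mmap (@polyC R) (fun i => if i == 0 then P else Q) q).[t] = q.@[pt P.[t] Q.[t]].
Proof.
rewrite -horner_evalE (@mmap_morph 2 R _ _ (horner_eval t)) /meval.
apply: mmap_ext => r /=; first by rewrite horner_evalE hornerC.
by rewrite /pt; case: (r == 0); rewrite horner_evalE.
Qed.

Lemma ivt01 {R : rcfType} (p : {poly R}) :
  p.[0] * p.[1] <= 0 -> exists2 x, 0 <= x <= 1 & root p x.
Proof.
move=> hp.
have [h0|h0] := lerP p.[0] 0.
- have [h1|h1] := lerP 0 p.[1].
  + by apply: poly_ivt; rewrite ?ler01 ?h0 ?h1.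
  + exists 0; first by rewrite lexx ler01.
    rewrite /root; apply/eqP; apply: le_anti; rewrite h0 /=; nra.
- have [h1|h1] := lerP p.[1] 0.
  + have [|y hy ry] := @poly_ivt _ (- p) 0 1 ler01.
      by rewrite !hornerN oppr_le0 oppr_ge0 h1 ltW.
    by exists y; rewrite // -rootN.
  + exfalso; nra.
Qed.
Theorem proposition3p6 (R : rcfType) (d : nat)
  (u1 u2 g h u1' u2' : {mpoly R[2]}) :
  u1 \is d.-homog -> u2 \is d.-homog ->
  binary_form g -> binary_form h -> binary_form u1' -> binary_form u2' ->
  u1 = u1' * g * h -> u2 = u2' * g * h ->
  is_gcd u1 u2 (g * h) ->
  is_gcd u1' u2' 1 ->
  is_gcd (u1' ^+ 2 + u2' ^+ 2) g 1 ->
  (forall z : 'I_2 -> R[i], is_root_C h z -> is_root_C (u1' ^+ 2 + u2' ^+ 2) z) ->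
  (forall x : 'I_2 -> R, ~ is_root_R (u1' ^+ 2 + u2' ^+ 2) x) /\
  (forall x : 'I_2 -> R, ~ is_root_R h x) /\
  ~~ odd (form_deg h).
Proof.
move=> _ _ _ [kh hh] bu1 bu2 _ _ _ hg12 _ hroot.
have P1 : forall x : 'I_2 -> R, ~ is_root_R (u1' ^+ 2 + u2' ^+ 2) x.
  move=> x [nz px]; apply: (@no_common_real_root R u1' u2' x bu1 bu2 hg12 nz).
  - move: px; rewrite mevalD !rmorphXn /= => /eqP.
    by rewrite paddr_eq0 ?sqr_ge0 // !sqrf_eq0 => /andP[/eqP -> _].
  - move: px; rewrite mevalD !rmorphXn /= => /eqP.
    by rewrite paddr_eq0 ?sqr_ge0 // !sqrf_eq0 => /andP[_ /eqP ->].
have C2R : forall x : 'I_2 -> R, (exists j, x j != 0) ->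
    is_root_C h (fun i => (x i)%:C%C) -> False.
  move=> x [j nz] hc; apply: (P1 x); split; first by exists j.
  have [_] := hroot _ hc.
  by rewrite cplx_eval => /(congr1 (@complex.Re R)).
have P2 : forall x : 'I_2 -> R, ~ is_root_R h x.
  move=> x [[j nz] hx]; apply: (C2R x); first by exists j.
  split; last by rewrite cplx_eval hx.
  exists j; apply/negP => /eqP /(congr1 (@complex.Re R)) /= /eqP; exact/negP.
split; first exact: P1.
split; first exact: P2.
have hnz : h != 0.
  apply/negP => /eqP h0; apply: (C2R (pt 1 0)); first by exists 0; rewrite /pt eqxx oner_eq0.
  split; last by rewrite cplx_eval h0 meval0 rmorph0.
  exists 0; rewrite /pt eqxx; apply/negP => /eqP /(congr1 (@complex.Re R)) /= /eqP; by rewrite oner_eq0.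
have -> : form_deg h = kh.
  rewrite /form_deg; symmetry; apply: (dhomog_uniq hnz hh); exact: dhomog_msize hh.
apply/negP => hodd.
set a := h.@[pt 1 0].
set b := h.@[pt 0 1].
have hma : h.@[pt (-1) 0] = - a.
  have -> : h.@[pt (-1) 0] = mmap idfun (fun i => pt 1 0 i * (-1)) h.
    by apply: meval_eq => i; rewrite /pt; case: (i == 0); rewrite ?mul1r ?mul0r.
  by rewrite (@mmap_homog 2 R _ _ (pt 1 0) _ _ _ hh) -signr_odd hodd expr1 mulN1r.
pose Q1 := mmap (@polyC R) (fun i => if i == 0 then 1 - 'X else 'X) h.
pose Q2 := mmap (@polyC R) (fun i => if i == 0 then - 'X else 1 - 'X) h.
have Q1E : forall t, Q1.[t] = h.@[pt (1 - t) t].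
  by move=> t; rewrite /Q1 evpt !hornerE.
have Q2E : forall t, Q2.[t] = h.@[pt (- t) (1 - t)].
  by move=> t; rewrite /Q2 evpt !hornerE.
have [hab|hab] := lerP (a * b) 0.
- have [|t _ rt] := @ivt01 R Q1.
    by rewrite !Q1E subr0 subrr.
  apply: (P2 (pt (1 - t) t)); split; last by move: rt; rewrite /root Q1E => /eqP.
  have [t0|t0] := eqVneq t 0.
  + by exists 0; rewrite /pt eqxx t0 subr0 oner_eq0.
  + by exists 1; rewrite /pt.
- have [|t _ rt] := @ivt01 R Q2.
    rewrite !Q2E oppr0 addr0 subrr -/b hma; nra.
  apply: (P2 (pt (- t) (1 - t))); split; last by move: rt; rewrite /root Q2E => /eqP.
  have [t0|t0] := eqVneq t 0.
  + by exists 1; rewrite /pt t0 subr0 oner_eq0.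
  + by exists 0; rewrite /pt eqxx oppr_eq0.
Qed.
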